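(* For every $n\ge 2$, the real projective space $\mathbb RP^n(1)$ of constant sectional curvature $1$ admits no ideal embedding (no ideal immersion) into any Euclidean space $\mathbb E^m$, regardless of codimension.
   Context: For a Riemannian $n$-manifold $M$: the scalar curvature at $p$ is $\tau(p)=\sum_{i<j}K(e_i\wedge e_j)$ for an orthonormal basis of $T_pM$; for a subspace $L\subset T_pM$ of dimension $r\ge2$, $\tau(L)=\sum_{\alpha<\beta}K(e_\alpha\wedge e_\beta)$ over an orthonormal basis of $L$. Let $\mathcal S(n)$ be the set of unordered $k$-tuples $(n_1,\dots,n_k)$, $k\ge1$, of integers $\ge2$ with $n_1<n$ and $\sum n_j\le n$. Define $\delta(n_1,\dots,n_k)(p)=\tau(p)-\inf\{\tau(L_1)+\dots+\tau(L_k)\}$ over mutually orthogonal subspaces $L_j\subset T_pM$ with $\dim L_j=n_j$; $c(n_1,\dots,n_k)=\frac{n^2(n+k-1-\sum n_j)}{2(n+k-\sum n_j)}$; $\hat\Delta_0(M)=\max_{\mathcal S(n)}\delta(n_1,\dots,n_k)/c(n_1,\dots,n_k)$. For an isometric immersion $x:M\to\mathbb E^m$ with mean curvature vector $\vec H=\frac1n\operatorname{trace}h$ ($h$ the second fundamental form) and $H=|\vec H|$, one always has $H^2\ge\hat\Delta_0(M)$; the immersion is called ideal if $H^2=\hat\Delta_0(M)$ identically. *)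

(* Defs.v *)
From HB Require Import structures.
From mathcomp Require Import all_boot all_order all_algebra.
From mathcomp Require Import all_classical all_reals all_analysis.
Set Implicit Arguments. Unset Strict Implicit. Unset Printing Implicit Defensive.
Import Order.TTheory GRing.Theory Num.Theory.
Import numFieldNormedType.Exports.
Local Open Scope classical_set_scope.
Local Open Scope ring_scope.

Section Defs.
Variable R : realType.

Definition dotv (k : nat) (u v : 'rV[R]_k) : R := \sum_(i < k) u 0 i * v 0 i.

Definition on_sphere (N : nat) (p : 'rV[R]_N.+1) : Prop := dotv p p = 1.
Definition tangent (N : nat) (p v : 'rV[R]_N.+1) : Prop := dotv p v = 0.

Definition tangent_on_family (N : nat) (p : 'rV[R]_N.+1) (e : nat -> 'rV[R]_N.+1)
  (r : nat) : Prop :=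
  (forall a, (a < r)%N -> tangent p (e a)) /\
  (forall a b, (a < r)%N -> (b < r)%N -> dotv (e a) (e b) = (a == b)%:R).

Fixpoint iter_D (V W : normedModType R) (vs : seq V) (f : V -> W) : V -> W :=
  match vs with
  | [::] => f
  | v :: vs' => 'D_v (iter_D vs' f)
  end.
Definition smooth (V W : normedModType R) (f : V -> W) : Prop :=
  forall (vs : seq V) (x : V), differentiable (iter_D vs f) x.

(** An isometric immersion of RP^n(1) = S^n / {+-1} into E^m, given by its
    lift to S^n (an antipodally invariant isometric immersion of the unit
    sphere), realized as the restriction to S^n of a smooth map on R^(n+1). *)
Definition isometric_immersion_RP (n m : nat) (f : 'rV[R]_n.+1 -> 'rV[R]_m) : Prop :=
  smooth f /\
  (forall p, on_sphere p -> f (- p) = f p) /\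
  (forall p u v, on_sphere p -> tangent p u -> tangent p v ->
     dotv ('D_u f p) ('D_v f p) = dotv u v).

(** Unit-speed great circle (geodesic of S^n(1), hence of RP^n(1)) through p
    with initial velocity v. *)
Definition geod (N : nat) (p v : 'rV[R]_N.+1) (t : R) : 'rV[R]_N.+1 :=
  cos t *: p + sin t *: v.

(** Second fundamental form on the diagonal: h(v,v) = (x o gamma_v)''(0)
    (Gauss formula along a geodesic). *)
Definition sff_diag (n m : nat) (f : 'rV[R]_n.+1 -> 'rV[R]_m) (p v : 'rV[R]_n.+1)
  : 'rV[R]_m :=
  'D_1 ('D_1 (f \o geod p v)) 0.

(** Mean curvature vector H = (1/n) trace h, computed in the orthonormal
    basis e 0, ..., e (n-1) of T_p. *)
Definition mean_curv (n m : nat) (f : 'rV[R]_n.+1 -> 'rV[R]_m) (p : 'rV[R]_n.+1)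
  (e : nat -> 'rV[R]_n.+1) : 'rV[R]_m :=
  n%:R^-1 *: \sum_(0 <= a < n) sff_diag f p (e a).

(** tau of the span of the orthonormal vectors e lo, ..., e (hi-1), for a
    sectional curvature function K (K u v = K(u /\ v) for orthonormal u, v). *)
Definition tau_seg (V : Type) (K : V -> V -> R) (e : nat -> V) (lo hi : nat) : R :=
  \sum_(lo <= a < hi) \sum_(a.+1 <= b < hi) K (e a) (e b).

(** sum of tau(L_j) where L_1, ..., L_k are consecutive blocks of sizes s. *)
Fixpoint tau_blocks (V : Type) (K : V -> V -> R) (e : nat -> V) (lo : nat)
  (s : seq nat) : R :=
  match s with
  | [::] => 0
  | nj :: s' => tau_seg K e lo (lo + nj) + tau_blocks K e (lo + nj) s'
  end.

Definition S_adm (n : nat) (s : seq nat) : bool :=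
  [&& (0 < size s)%N, all (fun x => (2 <= x < n)%N) s & (sumn s <= n)%N].

(** delta(n_1, ..., n_k)(p); the scalar curvature tau(p) is computed in the
    orthonormal basis e of T_p; mutually orthogonal subspaces L_j of T_p with
    dim L_j = n_j are given by orthonormal bases, concatenated in E. *)
Definition delta_inv (N : nat) (K : 'rV[R]_N.+1 -> 'rV[R]_N.+1 -> R)
  (p : 'rV[R]_N.+1) (e : nat -> 'rV[R]_N.+1) (s : seq nat) : R :=
  tau_seg K e 0 N -
  inf [set t | exists E : nat -> 'rV[R]_N.+1,
         tangent_on_family p E (sumn s) /\ t = tau_blocks K E 0 s].

Definition c_const (n : nat) (s : seq nat) : R :=
  (n%:R ^+ 2 * ((n + size s)%:R - 1 - (sumn s)%:R)) /
  (2 * ((n + size s)%:R - (sumn s)%:R)).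

(** hat Delta_0(p) = max over S(n) of delta / c (as a sup of a finite set;
    mathcomp's convention sup set0 = 0 applies when S(n) is empty). *)
Definition DeltaHat0 (N : nat) (K : 'rV[R]_N.+1 -> 'rV[R]_N.+1 -> R)
  (p : 'rV[R]_N.+1) (e : nat -> 'rV[R]_N.+1) : R :=
  sup [set t | exists s, S_adm N s /\ t = delta_inv K p e s / c_const N s].

Definition K_RP1 (N : nat) : 'rV[R]_N.+1 -> 'rV[R]_N.+1 -> R := fun _ _ => 1.

Definition ideal_RP (n m : nat) (f : 'rV[R]_n.+1 -> 'rV[R]_m) : Prop :=
  forall (p : 'rV[R]_n.+1) (e : nat -> 'rV[R]_n.+1),
    on_sphere p -> tangent_on_family p e n ->
    dotv (mean_curv f p e) (mean_curv f p e) = DeltaHat0 (@K_RP1 n) p e.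

End Defs.

(* Main.v *)
Require Import Defs.
From HB Require Import structures.
From mathcomp Require Import all_boot all_order all_algebra.
From mathcomp Require Import all_classical all_reals all_analysis.
From mathcomp Require Import ring lra zify.
Set Implicit Arguments. Unset Strict Implicit. Unset Printing Implicit Defensive.
Import Order.TTheory GRing.Theory Num.Theory.
Import numFieldNormedType.Exports.
Local Open Scope classical_set_scope.
Local Open Scope ring_scope.

Section A.
Context {R : realType} {V W : normedModType R}.

Lemma diff_eps (f : V -> W) x : differentiable f x -> forall eps : R, 0 < eps ->
  \forall h \near (0:V), `|f (h + x) - f x - 'd f x h| <= eps * `|h|.
Proof.
move=> /diff_locally E eps e0.
have := (eqaddoP _ _ _ _).1 E eps e0.
apply: filterS => h /=.
by rewrite opprD addrA.
Qed.

Lemma line_quot (G : V -> W) (a y : V) (s0 : R) :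
  (fun h : R => h^-1 *: (((fun s : R => G (s *: a + y)) \o shift s0) (h *: (1:R)) - G (s0 *: a + y)))
  = (fun h : R => h^-1 *: ((G \o shift (s0 *: a + y)) (h *: a) - G (s0 *: a + y))).
Proof.
apply/funext => h /=; congr (_ *: (G _ - _)).
by rewrite [h *: 1]mulr1 scalerDl addrA.
Qed.

Lemma is_derive_line (G : V -> W) (a y : V) (s0 : R) :
  derivable G (s0 *: a + y) a ->
  is_derive s0 1 (fun s : R => G (s *: a + y)) ('D_a G (s0 *: a + y)).
Proof.
move=> dG; split.
  by rewrite /derivable line_quot.
by rewrite /derive line_quot.
Qed.


Lemma cont_line (G : V -> W) (a y : V) :
  (forall z, differentiable G z) -> continuous (fun s : R => G (s *: a + y)).
Proof.
move=> dG s0.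
have h1 := is_derive_line (diff_derivable (v:=a) (dG (s0 *: a + y))).
have : derivable (fun s : R => G (s *: a + y)) s0 1 by case: h1.
move/derivable1_diffP => /differentiable_continuous; exact.
Qed.

End A.

Section S.
Context {R : realType} {V : normedModType R}.

Definition Dl (G : V -> R) (x a b : V) (h : R) :=
  G (h *: a + (h *: b + x)) - G (h *: a + x) - G (h *: b + x) + G x.

Lemma schwarz_half (G : V -> R) (a b x : V) :
  (forall z, differentiable G z) -> differentiable ('D_a G) x ->
  forall eps : R, 0 < eps -> exists2 d : R, 0 < d & forall h : R, 0 < h -> h < d ->
  `|Dl G x a b h - h ^+ 2 * 'D_b ('D_a G) x| <= eps * h ^+ 2.
Proof.
move=> dG dP eps e0.
set c := `|a| + `|b| + 1.
have c0 : 0 < c by rewrite /c ltr_pwDr // addr_ge0.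
set eps' := eps / (2 * c).
have e'0 : 0 < eps' by rewrite divr_gt0 // mulr_gt0.
have := diff_eps dP e'0; move/nbhs_norm0P => [d0 /= d00 Hd0].
exists (d0 / c); first by rewrite divr_gt0.
move=> h h0 hd.
set P := 'D_a G.
set L := 'd P x.
pose k := fun s : R => G (s *: a + (h *: b + x)) - G (s *: a + x).
have kd : forall s : R, is_derive s 1 k (P (s *: a + (h *: b + x)) - P (s *: a + x)).
  move=> s; apply: is_deriveB; apply: is_derive_line; exact: diff_derivable.
have kc : {within `[0, h], continuous k}.
  apply: continuous_subspaceT => s; apply: continuousB; exact: cont_line.
have [xi /andP[xi0 xih] Hxi] := MVT h0 (fun s _ => kd s) kc.
have xi0' : 0 <= xi by apply: ltW.
have xih' : xi <= h by apply: ltW.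
set y1 := xi *: a + h *: b.
set y2 := xi *: a.
have hc : h * c < d0 by rewrite -ltr_pdivlMr.
have na : `|y2| <= h * `|a| by rewrite /y2 normrZ ger0_norm // ler_wpM2r.
have nb : `|y1| <= h * (`|a| + `|b|).
  rewrite (le_trans (ler_normD _ _)) // mulrDr lerD //.
  by rewrite normrZ gtr0_norm.
have y1d : `|y1| < d0.
  apply: le_lt_trans nb _; apply: le_lt_trans hc.
  rewrite /c; have := normr_ge0 a; have := normr_ge0 b; nra.
have y2d : `|y2| < d0.
  apply: le_lt_trans na _; apply: le_lt_trans hc.
  rewrite /c; have := normr_ge0 a; have := normr_ge0 b; nra.
have E1 := Hd0 y1 y1d; have E2 := Hd0 y2 y2d.
rewrite /= in E1 E2.
have kk : Dl G x a b h = k h - k 0.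
  by rewrite /Dl /k !scale0r !add0r; ring.
rewrite kk Hxi subr0 /P (deriveE _ dP) -/P -/L.
have -> : xi *: a + (h *: b + x) = y1 + x by rewrite /y1 addrA.
have Ly : L y1 = L y2 + h * L b by rewrite /y1 linearD [L (h *: b)]linearZ.
set e1 := P (y1 + x) - P x - L y1 in E1.
set e2 := P (y2 + x) - P x - L y2 in E2.
have -> : (P (y1 + x) - P (y2 + x)) * h - h ^+ 2 * L b = h * (e1 - e2).
  rewrite /e1 /e2 Ly /y2.
  move: (P (y1 + x)) (P x) (P (xi *: a + x)) (L (xi *: a)) (L b) => p1 p2 p3 l1 l2.
  rewrite expr2; ring.
rewrite normrM gtr0_norm //.
have : `|e1 - e2| <= eps' * (h * (`|a| + `|b|)) + eps' * (h * `|a|).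
  rewrite (le_trans (ler_normB _ _)) // lerD //.
    by apply: le_trans E1 _; rewrite ler_wpM2l // ltW.
  by apply: le_trans E2 _; rewrite ler_wpM2l // ltW.
move=> He.
apply: le_trans (ler_wpM2l (ltW h0) He) _.
have Heps : eps = eps' * (2 * c).
  by rewrite /eps' divfK // mulf_neq0 // gt_eqF.
rewrite Heps /c.
have := normr_ge0 a; have := normr_ge0 b => nb0 na0.
have hh := mulr_gt0 e'0 (mulr_gt0 h0 h0).
rewrite expr2; nra.
Qed.

Lemma Dl_sym (G : V -> R) x a b h : Dl G x a b h = Dl G x b a h.
Proof. by rewrite /Dl addrCA; ring. Qed.

Lemma schwarz (G : V -> R) (a b x : V) :
  (forall z, differentiable G z) -> differentiable ('D_a G) x ->
  differentiable ('D_b G) x ->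
  'D_b ('D_a G) x = 'D_a ('D_b G) x.
Proof.
move=> dG dPa dPb.
set L1 := 'D_b ('D_a G) x; set L2 := 'D_a ('D_b G) x.
suff key : forall e : R, 0 < e -> `|L1 - L2| <= e.
  apply/eqP; rewrite -subr_eq0 -normr_le0 leNgt; apply/negP => dpos.
  have := key _ (divr_gt0 dpos (ltr0n _ 2)).
  move=> H; lra.
move=> e e0.
have e20 : 0 < e / 2 by rewrite divr_gt0.
have [d1 d10 H1] := schwarz_half b dG dPa e20.
have [d2 d20 H2] := schwarz_half a dG dPb e20.
set h := Num.min d1 d2 / 2.
have hm : 0 < Num.min d1 d2 by rewrite lt_min d10 d20.
have h0 : 0 < h by rewrite divr_gt0.
have hd : h < Num.min d1 d2 by rewrite /h ltr_pdivrMr // ltr_pMr // ltr1n.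
have hd1 : h < d1 by apply: lt_le_trans hd _; rewrite ge_min lexx.
have hd2 : h < d2 by apply: lt_le_trans hd _; rewrite ge_min lexx orbT.
have A1 := H1 h h0 hd1; have A2 := H2 h h0 hd2.
rewrite Dl_sym in A2.
have hh : 0 < h ^+ 2 by rewrite exprn_gt0.
have key2 : `|h ^+ 2 * (L1 - L2)| <= e * h ^+ 2.
  have -> : h ^+ 2 * (L1 - L2) = (Dl G x a b h - h ^+ 2 * L2) - (Dl G x a b h - h ^+ 2 * L1).
    by ring.
  rewrite (le_trans (ler_normB _ _)) //.
  apply: le_trans (lerD A2 A1) _.
  by rewrite -mulrDl -splitr.
by rewrite normrM gtr0_norm // mulrC ler_pM2r // in key2.
Qed.
End S.

Section B.
Context {R : realType}.

Lemma derive_dirD {V W : normedModType R} (G : V -> W) x a b :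
  differentiable G x -> 'D_(a + b) G x = 'D_a G x + 'D_b G x.
Proof. by move=> d; rewrite !deriveE // linearD. Qed.

Lemma derive_dirZ {V W : normedModType R} (G : V -> W) x a (c : R) :
  differentiable G x -> 'D_(c *: a) G x = c *: 'D_a G x.
Proof. by move=> d; rewrite !deriveE // linearZ. Qed.

Lemma derive_dirN {V W : normedModType R} (G : V -> W) x a :
  differentiable G x -> 'D_(- a) G x = - 'D_a G x.
Proof. by move=> d; rewrite !deriveE // linearN. Qed.

Lemma derive_dir0 {V W : normedModType R} (G : V -> W) x :
  differentiable G x -> 'D_0 G x = 0.
Proof. by move=> d; rewrite !deriveE // linear0. Qed.

Lemma is_derive_scal_vec {W : normedModType R} (k : R -> R) (P : W) (t : R) (k' : R) :
  is_derive t 1 k k' -> is_derive t 1 (fun s => k s *: P) (k' *: P).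
Proof.
move=> [dk vk].
have dk' : differentiable k t by apply/derivable1_diffP.
have dd : differentiable (fun s => k s *: P) t by apply: differentiableZl.
split; first exact: diff_derivable.
rewrite deriveE // diffZl //; congr (_ *: _).
by rewrite -deriveE // vk.
Qed.

Context {N : nat}.
Local Notation V := ('rV[R]_N.+1).

Lemma is_derive_geod (P Q : V) (t : R) : is_derive t 1 (geod P Q) (geod Q (- P) t).
Proof.
rewrite /geod.
have -> : cos t *: Q + sin t *: - P = (- sin t) *: P + cos t *: Q.
  by rewrite scalerN scaleNr addrC.
apply: is_deriveD; apply: is_derive_scal_vec; first [exact: is_derive_cos|exact: is_derive_sin].
Qed.

Lemma differentiable_geod (P Q : V) (t : R) : differentiable (geod P Q) t.
Proof. by apply/derivable1_diffP; have [] := is_derive_geod P Q t. Qed.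

Lemma is_derive_comp_geod {W : normedModType R} (G : V -> W) (P Q : V) (t : R) :
  differentiable G (geod P Q t) ->
  is_derive t 1 (fun s => G (geod P Q s)) ('D_(geod Q (- P) t) G (geod P Q t)).
Proof.
move=> dG.
have dc := differentiable_geod P Q t.
have dd : differentiable (G \o geod P Q) t by apply: differentiable_comp.
split; first exact: diff_derivable.
rewrite (deriveE _ dd) diff_comp // /= -(deriveE _ dc).
have hg := is_derive_geod P Q t.
by rewrite derive_val -deriveE.
Qed.

End B.

Section C.
Context {R : realType}.

Lemma iter_D_rcons {V W : normedModType R} (G : V -> W) vs v :
  iter_D vs ('D_v G) = iter_D (rcons vs v) G.
Proof. by elim: vs => //= w vs ->. Qed.

Lemma smooth_D {V W : normedModType R} (G : V -> W) v : smooth G -> smooth ('D_v G).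
Proof. by move=> sG vs x; rewrite iter_D_rcons; apply: sG. Qed.

Lemma smooth_diff {V W : normedModType R} (G : V -> W) x : smooth G -> differentiable G x.
Proof. by move=> sG; apply: (sG [::]). Qed.

Lemma smooth_coord {V : normedModType R} {m : nat} (F : V -> 'rV[R]_m) i :
  smooth F -> forall vs, iter_D vs (fun y => F y 0 i) = (fun y => iter_D vs F y 0 i).
Proof.
move=> sF; elim => //= v vs ->.
apply/funext => y; rewrite derive_mx //=; first by rewrite mxE.
exact/diff_derivable/sF.
Qed.

Lemma smooth_coordS {V : normedModType R} {m : nat} (F : V -> 'rV[R]_m) i :
  smooth F -> smooth (fun y => F y 0 i).
Proof.
move=> sF vs x; rewrite smooth_coord //.
apply: (@differentiable_comp _ _ _ _ (iter_D vs F) (fun M : 'rV[R]_m => M 0 i)).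
  exact: sF.
exact: differentiable_coord.
Qed.

Lemma derive_coord {V : normedModType R} {m : nat} (F : V -> 'rV[R]_m) i v x :
  differentiable F x -> 'D_v F x 0 i = 'D_v (fun y => F y 0 i) x.
Proof. by move=> d; rewrite derive_mx ?mxE //; exact: diff_derivable. Qed.

Context {N : nat}.
Local Notation V := ('rV[R]_N.+1).

Lemma geodE (P Q : V) t : geod P Q t = cos t *: P + sin t *: Q.
Proof. by []. Qed.

Lemma derive_geod_dir (G : V -> R) (P Q : V) t x :
  differentiable G x ->
  'D_(geod P Q t) G x = cos t * 'D_P G x + sin t * 'D_Q G x.
Proof. by move=> d; rewrite geodE derive_dirD // !derive_dirZ. Qed.

Lemma aux_var (a b c d f X : R) : X + c * - b + (b * f + d * a) = a * d + b * - c + (X + b * f).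
Proof. ring. Qed.

Lemma is_derive_var (G : V -> R) (P Q P' Q' : V) (t : R) : smooth G ->
  is_derive t 1 (fun s => 'D_(geod P' Q' s) G (geod P Q s))
    ('D_(geod Q' (- P') t) G (geod P Q t) +
     'D_(geod Q (- P) t) ('D_(geod P' Q' t) G) (geod P Q t)).
Proof.
move=> sG.
have dG x : differentiable G x by exact: smooth_diff.
have dP' x : differentiable ('D_P' G) x by apply: smooth_diff; apply: smooth_D.
have dQ' x : differentiable ('D_Q' G) x by apply: smooth_diff; apply: smooth_D.
have -> : (fun s => 'D_(geod P' Q' s) G (geod P Q s)) =
  ((cos : R -> R) * (fun s => 'D_P' G (geod P Q s)) + (sin : R -> R) * (fun s => 'D_Q' G (geod P Q s))).
  by apply/funext => s; rewrite derive_geod_dir.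
have -> : 'D_(geod P' Q' t) G = (cos t \*: 'D_P' G + sin t \*: 'D_Q' G).
  by apply/funext => x; rewrite derive_geod_dir.
have h1 := is_derive_comp_geod (P:=P) (Q:=Q) (t:=t) (dP' (geod P Q t)).
have h2 := is_derive_comp_geod (P:=P) (Q:=Q) (t:=t) (dQ' (geod P Q t)).
have h3 := is_derive_cos t; have h4 := is_derive_sin t.
have H := is_deriveD (is_deriveM h3 h1) (is_deriveM h4 h2).
apply: is_derive_eq H _.
rewrite deriveD; last 2 first.
- by apply: derivableZ; exact: diff_derivable.
- by apply: derivableZ; exact: diff_derivable.
rewrite !deriveZ; try exact: diff_derivable.
rewrite (derive_geod_dir Q' (- P') t (dG (geod P Q t))) derive_dirN //.
move: (cos t) (sin t) ('D_P' G (geod P Q t)) ('D_Q' G (geod P Q t))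
  ('D_(geod Q (- P) t) ('D_P' G) (geod P Q t)) ('D_(geod Q (- P) t) ('D_Q' G) (geod P Q t)).
move=> a b c d e f /=.
set X := a *: _.
exact: aux_var.
Qed.

Lemma is_derive_var0 (G : V -> R) (P Q P' Q' : V) : smooth G ->
  is_derive (0:R) 1 (fun s => 'D_(geod P' Q' s) G (geod P Q s))
    ('D_Q' G P + 'D_Q ('D_P' G) P).
Proof.
move=> sG; apply: is_derive_eq (is_derive_var P Q P' Q' 0 sG) _.
by rewrite /geod cos0 sin0 !scale1r !scale0r ?addr0 ?add0r.
Qed.

Lemma is_derive_comp_geod0 (G : V -> R) (P Q : V) : smooth G ->
  is_derive (0:R) 1 (fun s => G (geod P Q s)) ('D_Q G P).
Proof.
move=> sG; apply: is_derive_eq (is_derive_comp_geod (smooth_diff _ sG)) _.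
by rewrite /geod cos0 sin0 !scale1r !scale0r ?addr0 ?add0r.
Qed.

End C.

Section Dot.
Context {R : realType} {k : nat}.
Implicit Types u v w : 'rV[R]_k.

Lemma dotvC u v : dotv u v = dotv v u.
Proof. by rewrite /dotv; apply: eq_bigr => i _; rewrite mulrC. Qed.
Lemma dotvDl u v w : dotv (u + v) w = dotv u w + dotv v w.
Proof. by rewrite /dotv -big_split; apply: eq_bigr => i _; rewrite mxE mulrDl. Qed.
Lemma dotvDr u v w : dotv w (u + v) = dotv w u + dotv w v.
Proof. by rewrite dotvC dotvDl !(dotvC w). Qed.
Lemma dotvZl (c : R) u v : dotv (c *: u) v = c * dotv u v.
Proof. by rewrite /dotv mulr_sumr; apply: eq_bigr => i _; rewrite mxE mulrA. Qed.
Lemma dotvZr (c : R) u v : dotv u (c *: v) = c * dotv u v.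
Proof. by rewrite dotvC dotvZl dotvC. Qed.
Lemma dotvNl u v : dotv (- u) v = - dotv u v.
Proof. by rewrite -scaleN1r dotvZl mulN1r. Qed.
Lemma dotvNr u v : dotv u (- v) = - dotv u v.
Proof. by rewrite dotvC dotvNl dotvC. Qed.
Lemma dotv_ge0 u : 0 <= dotv u u.
Proof. by rewrite /dotv sumr_ge0 // => i _; rewrite -expr2 sqr_ge0. Qed.
Lemma dotv0 u : dotv u u = 0 -> u = 0.
Proof.
move=> H; apply/rowP => i; rewrite mxE.
have : \sum_(j < k) u 0 j * u 0 j = 0 by [].
move/eqP; rewrite psumr_eq0; last by move=> j _; rewrite -expr2 sqr_ge0.
by move/allP/(_ i (mem_index_enum _)); rewrite /= -expr2 sqrf_eq0 => /eqP.
Qed.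

End Dot.

Section Geo.
Context {R : realType} {N : nat}.
Local Notation V := ('rV[R]_N.+1).

Lemma geod_sphere (p u : V) t : on_sphere p -> dotv u u = 1 -> dotv p u = 0 ->
  on_sphere (geod p u t).
Proof.
rewrite /on_sphere /geod => pp uu pu.
have up : dotv u p = 0 by rewrite dotvC.
rewrite !dotvDl !dotvDr !dotvZl !dotvZr pp uu pu up.
by rewrite !mulr0 !addr0 add0r !mulr1 -!expr2 cos2Dsin2.
Qed.

Lemma geod_tan (p u : V) t : on_sphere p -> dotv u u = 1 -> dotv p u = 0 ->
  tangent (geod p u t) (geod u (- p) t).
Proof.
rewrite /on_sphere /tangent /geod => pp uu pu.
have up : dotv u p = 0 by rewrite dotvC.
rewrite !dotvDl !dotvDr !dotvZl !dotvZr !dotvNr pp uu pu up.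
rewrite !oppr0 !mulr0 !mulr1; ring.
Qed.

Lemma geod'_unit (p u : V) t : on_sphere p -> dotv u u = 1 -> dotv p u = 0 ->
  dotv (geod u (- p) t) (geod u (- p) t) = 1.
Proof.
move=> pp uu pu; have := @geod_sphere u (- p) t uu.
rewrite /on_sphere dotvNl dotvNr opprK dotvNr dotvC pu oppr0; apply => //.
Qed.

Lemma geod_tanw (p u w : V) t : dotv p w = 0 -> dotv u w = 0 -> tangent (geod p u t) w.
Proof.
by rewrite /tangent /geod => pw uw; rewrite dotvDl !dotvZl pw uw !mulr0 addr0.
Qed.

Lemma geod'_w (p u w : V) t : dotv p w = 0 -> dotv u w = 0 -> dotv (geod u (- p) t) w = 0.
Proof.
by rewrite /geod => pw uw; rewrite dotvDl !dotvZl dotvNl pw uw oppr0 !mulr0 addr0.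
Qed.

End Geo.

Section Calc.
Context {R : realType}.

Lemma is_deriveMf (f g : R -> R) (t df dg : R) :
  is_derive t 1 f df -> is_derive t 1 g dg ->
  is_derive t 1 (fun s => f s * g s) (f t * dg + g t * df).
Proof. by move=> Hf Hg; have := is_deriveM Hf Hg. Qed.

Lemma is_derive_sumf {m : nat} (h : 'I_m -> R -> R) (dh : 'I_m -> R) (t : R) :
  (forall i, is_derive t 1 (h i) (dh i)) ->
  is_derive t 1 (fun s => \sum_(i < m) h i s) (\sum_(i < m) dh i).
Proof. by move=> H; have := is_derive_sum H; rewrite fct_sumE. Qed.

Lemma deriv_zero (phi : R -> R) (c d : R) : (forall t, phi t = c) ->
  is_derive (0:R) 1 phi d -> d = 0.
Proof.
move=> H D; have e : phi = cst c by apply/funext.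
by move: D; rewrite e => -[_ <-]; rewrite derive_cst.
Qed.

End Calc.

Section Gauss.
Context {R : realType} {N m : nat}.
Local Notation V := ('rV[R]_N.+1).
Variable F : 'I_m -> V -> R.
Hypothesis sF : forall i, smooth (F i).
Hypothesis iso : forall p a b, on_sphere p -> tangent p a -> tangent p b ->
  \sum_(i < m) 'D_a (F i) p * 'D_b (F i) p = dotv a b.

Lemma geod0 (p u : V) : geod p u 0 = p.
Proof. by rewrite /geod cos0 sin0 scale1r scale0r addr0. Qed.

Lemma sD i v : smooth ('D_v (F i)). Proof. exact: smooth_D. Qed.
Lemma sDD i v w : smooth ('D_v ('D_w (F i))). Proof. by do 2 apply: smooth_D. Qed.
Lemma dF i x : differentiable (F i) x. Proof. exact: smooth_diff. Qed.
Lemma dD i v x : differentiable ('D_v (F i)) x. Proof. exact/smooth_diff/sD. Qed.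
Lemma dDD i v w x : differentiable ('D_v ('D_w (F i))) x. Proof. exact/smooth_diff/sDD. Qed.

Lemma sym2 i a b x : 'D_b ('D_a (F i)) x = 'D_a ('D_b (F i)) x.
Proof. by apply: schwarz; [exact: dF|exact: dD|exact: dD]. Qed.

Lemma sym2f i a b : 'D_b ('D_a (F i)) = 'D_a ('D_b (F i)).
Proof. by apply/funext => x; exact: sym2. Qed.

Lemma sym3 i a b c x : 'D_b ('D_a ('D_c (F i))) x = 'D_a ('D_b ('D_c (F i))) x.
Proof. by apply: schwarz; [exact: dD|exact: dDD|exact: dDD]. Qed.

Lemma T1 (p u w : V) : on_sphere p -> dotv u u = 1 -> dotv p u = 0 ->
  dotv p w = 0 -> dotv u w = 0 ->
  \sum_(i < m) 'D_w (F i) p * 'D_u ('D_w (F i)) p = 0.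
Proof.
move=> pp uu pu pw uw.
have H : forall s, (fun s => \sum_(i < m) 'D_w (F i) (geod p u s) * 'D_w (F i) (geod p u s)) s = dotv w w.
  move=> s; apply: iso; [exact: geod_sphere|exact: geod_tanw|exact: geod_tanw].
have D : is_derive (0:R) 1 (fun s => \sum_(i < m) 'D_w (F i) (geod p u s) * 'D_w (F i) (geod p u s))
   (\sum_(i < m) ('D_w (F i) p * 'D_u ('D_w (F i)) p + 'D_w (F i) p * 'D_u ('D_w (F i)) p)).
  apply: is_derive_sumf => i.
  have h := is_derive_comp_geod0 p u (sD i w).
  by have := is_deriveMf h h; rewrite geod0.
have := deriv_zero H D.
rewrite big_split /= => /eqP; rewrite -mulr2n mulrn_eq0 /= => /eqP //.
Qed.

Lemma T2 (p u w : V) : on_sphere p -> dotv u u = 1 -> dotv p u = 0 ->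
  dotv p w = 0 -> dotv u w = 0 ->
  \sum_(i < m) ((- 'D_p (F i) p + 'D_u ('D_u (F i)) p) * 'D_w (F i) p
     + 'D_u (F i) p * 'D_w ('D_u (F i)) p) = 0.
Proof.
move=> pp uu pu pw uw.
have H : forall s, (fun s => \sum_(i < m) 'D_(geod u (- p) s) (F i) (geod p u s) * 'D_w (F i) (geod p u s)) s = 0.
  move=> s /=; rewrite iso; first exact: geod'_w.
  - exact: geod_sphere.
  - exact: geod_tan.
  - exact: geod_tanw.
have D : is_derive (0:R) 1 (fun s => \sum_(i < m) 'D_(geod u (- p) s) (F i) (geod p u s) * 'D_w (F i) (geod p u s))
   (\sum_(i < m) ('D_u (F i) p * 'D_u ('D_w (F i)) p + 'D_w (F i) p * ('D_(- p) (F i) p + 'D_u ('D_u (F i)) p))).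
  apply: is_derive_sumf => i.
  have h1 := is_derive_var0 p u u (- p) (sF i).
  have h2 := is_derive_comp_geod0 p u (sD i w).
  by have := is_deriveMf h1 h2; rewrite !geod0.
have := deriv_zero H D => E.
rewrite -[RHS]E; apply: eq_bigr => i _.
rewrite (derive_dirN _ (dF i p)) (sym2 i w u) /GRing.scale /=; ring.
Qed.

End Gauss.

Lemma is_deriveDf {R : realType} (f g : R -> R) (t df dg : R) :
  is_derive t 1 f df -> is_derive t 1 g dg ->
  is_derive t 1 (fun s => f s + g s) (df + dg).
Proof. by move=> Hf Hg; have := is_deriveD Hf Hg. Qed.

Lemma is_deriveNf {R : realType} (f : R -> R) (t df : R) :
  is_derive t 1 f df -> is_derive t 1 (fun s => - f s) (- df).
Proof. by move=> Hf; have := is_deriveN Hf. Qed.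

Lemma combine {R : realType} {m : nat} (X Y A B e1 e2 e3 : 'I_m -> R) :
  (forall i, X i * Y i - (A i * A i + B i ^+ 2) = e3 i - e1 i - e2 i) ->
  \sum_(i < m) e1 i = 0 -> \sum_(i < m) e2 i = 0 -> \sum_(i < m) e3 i = 0 ->
  \sum_(i < m) X i * Y i = \sum_(i < m) A i * A i + \sum_(i < m) B i ^+ 2.
Proof.
move=> H h1 h2 h3; apply/eqP; rewrite -subr_eq0 -big_split /= -sumrB.
under eq_bigr do rewrite H.
by rewrite !sumrB h1 h2 h3 !subr0.
Qed.

Lemma aux_gauss {R : realType} (Aq Buu Bvv Av Bvu Amq Bvq Cvuu Au Bmqu Cvvu Bmqv Cuuv Buv Bqv : R) :
  Cuuv = Cvuu -> Buv = Bvu -> Amq = - Aq -> Bmqv = - Bqv -> Bqv = Bvq ->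
  (- Aq + Buu) * (- Aq + Bvv) - (Av * Av + Bvu ^+ 2) =
  (- Aq + Buu) * (Amq + Bvv) + Av * (- (Av + Bvq) + Cvuu) +
  (Au * (Bmqu + Cvvu) + Bvu * Bvu) - (Au * (Bmqu + Cvvu) + Bvu * Bvu) -
  (Av * (Bmqv + Cuuv) + Buv * Buv).
Proof. move=> -> -> -> -> ->; ring. Qed.

Section Gauss2.
Context {R : realType} {N m : nat}.
Local Notation V := ('rV[R]_N.+1).
Variable F : 'I_m -> V -> R.
Hypothesis sF : forall i, smooth (F i).
Hypothesis iso : forall p a b, on_sphere p -> tangent p a -> tangent p b ->
  \sum_(i < m) 'D_a (F i) p * 'D_b (F i) p = dotv a b.

Lemma s3 i (u v x : V) : 'D_u ('D_u ('D_v (F i))) x = 'D_v ('D_u ('D_u (F i))) x.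
Proof.
exact: (etrans (congr1 (fun G => 'D_u G x) (sym2f sF i v u)) (sym3 sF i v u u x)).
Qed.

Lemma gauss (q u v : V) : on_sphere q -> dotv u u = 1 -> dotv v v = 1 ->
  dotv q u = 0 -> dotv q v = 0 -> dotv u v = 0 ->
  \sum_(i < m) (- 'D_q (F i) q + 'D_u ('D_u (F i)) q) *
               (- 'D_q (F i) q + 'D_v ('D_v (F i)) q)
  = 1 + \sum_(i < m) ('D_v ('D_u (F i)) q) ^+ 2.
Proof.
move=> qq uu vv qu qv uv.
have vu : dotv v u = 0 by rewrite dotvC.
have uq : dotv u q = 0 by rewrite dotvC.
have H1 : forall t, (fun t => \sum_(i < m) 'D_u (F i) (geod q v t) *
     'D_(geod v (- q) t) ('D_u (F i)) (geod q v t)) t = 0.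
  move=> t; apply: (T1 sF iso).
  - exact: geod_sphere.
  - exact: geod'_unit.
  - exact: geod_tan.
  - exact: geod_tanw.
  - exact: geod'_w.
have D1 : is_derive (0:R) 1 (fun t => \sum_(i < m) 'D_u (F i) (geod q v t) *
     'D_(geod v (- q) t) ('D_u (F i)) (geod q v t))
   (\sum_(i < m) ('D_u (F i) q * ('D_(- q) ('D_u (F i)) q + 'D_v ('D_v ('D_u (F i))) q)
     + 'D_v ('D_u (F i)) q * 'D_v ('D_u (F i)) q)).
  apply: is_derive_sumf => i.
  have h1 := is_derive_comp_geod0 q v (sD sF i u).
  have h2 := is_derive_var0 q v v (- q) (sD sF i u).
  by have := is_deriveMf h1 h2; rewrite !geod0.
have E1 := deriv_zero H1 D1.
have H2 : forall t, (fun t => \sum_(i < m) 'D_v (F i) (geod q u t) *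
     'D_(geod u (- q) t) ('D_v (F i)) (geod q u t)) t = 0.
  move=> t; apply: (T1 sF iso).
  - exact: geod_sphere.
  - exact: geod'_unit.
  - exact: geod_tan.
  - exact: geod_tanw.
  - exact: geod'_w.
have D2 : is_derive (0:R) 1 (fun t => \sum_(i < m) 'D_v (F i) (geod q u t) *
     'D_(geod u (- q) t) ('D_v (F i)) (geod q u t))
   (\sum_(i < m) ('D_v (F i) q * ('D_(- q) ('D_v (F i)) q + 'D_u ('D_u ('D_v (F i))) q)
     + 'D_u ('D_v (F i)) q * 'D_u ('D_v (F i)) q)).
  apply: is_derive_sumf => i.
  have h1 := is_derive_comp_geod0 q u (sD sF i v).
  have h2 := is_derive_var0 q u u (- q) (sD sF i v).
  by have := is_deriveMf h1 h2; rewrite !geod0.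
have E2 := deriv_zero H2 D2.
have H3 : forall t, (fun t => \sum_(i < m)
     ((- 'D_(geod q v t) (F i) (geod q v t) + 'D_u ('D_u (F i)) (geod q v t)) *
        'D_(geod v (- q) t) (F i) (geod q v t)
      + 'D_u (F i) (geod q v t) * 'D_(geod v (- q) t) ('D_u (F i)) (geod q v t))) t = 0.
  move=> t; apply: (T2 sF iso).
  - exact: geod_sphere.
  - by [].
  - exact: geod_tanw.
  - exact: geod_tan.
  - by rewrite dotvC; exact: geod'_w.
have D3 : is_derive (0:R) 1 (fun t => \sum_(i < m)
     ((- 'D_(geod q v t) (F i) (geod q v t) + 'D_u ('D_u (F i)) (geod q v t)) *
        'D_(geod v (- q) t) (F i) (geod q v t)
      + 'D_u (F i) (geod q v t) * 'D_(geod v (- q) t) ('D_u (F i)) (geod q v t)))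
   (\sum_(i < m)
     (((- 'D_q (F i) q + 'D_u ('D_u (F i)) q) * ('D_(- q) (F i) q + 'D_v ('D_v (F i)) q)
      + 'D_v (F i) q * (- ('D_v (F i) q + 'D_v ('D_q (F i)) q) + 'D_v ('D_u ('D_u (F i))) q))
     + ('D_u (F i) q * ('D_(- q) ('D_u (F i)) q + 'D_v ('D_v ('D_u (F i))) q)
      + 'D_v ('D_u (F i)) q * 'D_v ('D_u (F i)) q))).
  apply: is_derive_sumf => i.
  have ha1 := is_derive_var0 q v q v (sF i).
  have ha2 := is_derive_comp_geod0 q v (sDD sF i u u).
  have ha := is_deriveDf (is_deriveNf ha1) ha2.
  have hb := is_derive_var0 q v v (- q) (sF i).
  have hc := is_derive_comp_geod0 q v (sD sF i u).
  have hd := is_derive_var0 q v v (- q) (sD sF i u).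
  by have := is_deriveDf (is_deriveMf ha hb) (is_deriveMf hc hd); rewrite !geod0.
have E3 := deriv_zero H3 D3.
have I1 := iso qq qv qv; rewrite vv in I1.
rewrite -I1.
apply: (@combine R m (fun i => - 'D_q (F i) q + 'D_u ('D_u (F i)) q)
   (fun i => - 'D_q (F i) q + 'D_v ('D_v (F i)) q) (fun i => 'D_v (F i) q)
   (fun i => 'D_v ('D_u (F i)) q) _ _ _ _ E1 E2 E3) => i /=.
have e1 := s3 i u v q.
have e2 := sym2 sF i v u q.
have e3 := derive_dirN q (dF sF i q).
have e4 := derive_dirN q (dD sF i v q).
have e5 := sym2 sF i v q q.
apply: aux_gauss.
- exact: e1.
- exact: e2.
- exact: e3.
- exact: e4.
- exact: e5.
Qed.

End Gauss2.

Section U.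
Context {R : realType} {k : nat}.
Implicit Types u v w : 'rV[R]_k.

Lemma dotv_suml {I : Type} (r : seq I) (P : pred I) (x : I -> 'rV[R]_k) w :
  dotv (\sum_(i <- r | P i) x i) w = \sum_(i <- r | P i) dotv (x i) w.
Proof.
elim/big_rec2: _ => [|i y1 y2 _ <-]; last by rewrite dotvDl.
by rewrite /dotv big1 // => j _; rewrite mxE mul0r.
Qed.

Lemma dotv_sumr {I : Type} (r : seq I) (P : pred I) (x : I -> 'rV[R]_k) w :
  dotv w (\sum_(i <- r | P i) x i) = \sum_(i <- r | P i) dotv w (x i).
Proof. by rewrite dotvC dotv_suml; apply: eq_bigr => i _; rewrite dotvC. Qed.

Lemma umbilic (n : nat) (x : 'I_n -> 'rV[R]_k) (i0 : 'I_n) : (2 <= n)%N ->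
  (forall a b, a != b -> 1 <= dotv (x a) (x b)) ->
  dotv (n%:R^-1 *: \sum_(a < n) x a) (n%:R^-1 *: \sum_(a < n) x a) <= 1 ->
  dotv (x i0) (x i0) <= 1.
Proof.
move=> n2 hab hH.
set S := \sum_(a < n) x a.
set H := n%:R^-1 *: S.
have n0 : n%:R != 0 :> R by rewrite pnatr_eq0 -lt0n (leq_trans _ n2).
have SH : S = n%:R *: H by rewrite /H scalerA mulfV // scale1r.
set hh := dotv H H.
set Q := \sum_(a < n) dotv (x a) (x a).
have E1 : \sum_(a < n) dotv (x a - H) (x a - H) = Q - n%:R * hh.
  have -> : \sum_(a < n) dotv (x a - H) (x a - H) =
     \sum_(a < n) (dotv (x a) (x a) - 2 * dotv (x a) H + hh).
    apply: eq_bigr => a _.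
    rewrite !dotvDl !dotvDr !dotvNl !dotvNr opprK (dotvC H (x a)) /hh; ring.
  rewrite big_split sumrB /= -mulr_sumr -dotv_suml -/S SH dotvZl sumr_const card_ord.
  rewrite /Q /hh -mulr_natl; ring.
have E2 : dotv S S >= Q + n%:R * (n%:R - 1).
  rewrite /S dotv_suml /Q.
  have -> : n%:R * (n%:R - 1) = \sum_(a < n) (n%:R - 1) :> R.
    by rewrite sumr_const card_ord mulr_natl.
  rewrite -big_split /=; apply: ler_sum => a _.
  rewrite dotv_sumr (bigD1 a) //= lerD2l.
  have -> : n%:R - 1 = \sum_(b < n | b != a) (1 : R).
    rewrite sumr_const; have := cardC1 a; rewrite card_ord => ->.
    by rewrite -[in LHS](prednK (leq_trans _ n2)) // -addn1 natrD addrK.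
  by apply: ler_sum => b hb; apply: hab; rewrite eq_sym.
have E3 : dotv S S = n%:R * n%:R * hh by rewrite SH dotvZl dotvZr /hh mulrA.
have nR2 : 2 <= n%:R :> R by rewrite ler_nat.
have hh0 : 0 <= hh by apply: dotv_ge0.
have Hsum : \sum_(a < n) dotv (x a - H) (x a - H) <= 0.
  have hH' : hh <= 1 by [].
  have P : 0 <= (n%:R * (n%:R - 1)) * (1 - hh) :> R.
    by apply: mulr_ge0; [apply: mulr_ge0; lra | lra].
  rewrite E1; rewrite E3 in E2; nra.
have Hi0 : dotv (x i0 - H) (x i0 - H) = 0.
  apply/eqP; rewrite eq_le dotv_ge0 andbT.
  apply: le_trans Hsum; rewrite (bigD1 i0) //= lerDl.
  by apply: sumr_ge0 => a _; apply: dotv_ge0.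
have := dotv0 Hi0; move/eqP; rewrite subr_eq0 => /eqP ->.
exact: hH.
Qed.

End U.

Section G.
Context {R : realType} {N m : nat}.
Local Notation V := ('rV[R]_N.+1).
Variable f : V -> 'rV[R]_m.
Hypothesis sf : smooth f.
Hypothesis iso : forall p u v, on_sphere p -> tangent p u -> tangent p v ->
  dotv ('D_u f p) ('D_v f p) = dotv u v.

Definition Fc (i : 'I_m) : V -> R := fun y => f y 0 i.
Lemma sFc i : smooth (Fc i). Proof. exact: smooth_coordS. Qed.
Lemma df y : differentiable f y. Proof. exact: smooth_diff. Qed.

Lemma isoF p a b : on_sphere p -> tangent p a -> tangent p b ->
  \sum_(i < m) 'D_a (Fc i) p * 'D_b (Fc i) p = dotv a b.
Proof.
move=> pp pa pb; rewrite -(iso pp pa pb) /dotv; apply: eq_bigr => i _.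
by rewrite !derive_coord //; exact: df.
Qed.

Lemma Dgeod_f (p w : V) : 'D_1 (f \o geod p w) = (fun s => 'D_(geod w (- p) s) f (geod p w s)).
Proof.
apply/funext => s.
have h := is_derive_comp_geod (P:=p) (Q:=w) (t:=s) (df (geod p w s)).
exact: (@derive_val _ _ _ _ _ _ _ h).
Qed.

Lemma sff_coord (p w : V) i : sff_diag f p w 0 i = - 'D_p (Fc i) p + 'D_w ('D_w (Fc i)) p.
Proof.
set h := fun s => 'D_(geod w (- p) s) f (geod p w s).
have hi : (fun s => h s 0 i) = (fun s => 'D_(geod w (- p) s) (Fc i) (geod p w s)).
  by apply/funext => s; rewrite /h derive_coord //; exact: df.
have Di := is_derive_var0 p w w (- p) (sFc i).
have dh : derivable h 0 1.
  apply/derivable_mxP => a j; rewrite (ord1 a).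
  have hj := is_derive_var0 p w w (- p) (sFc j).
  have -> : (fun x => h x 0 j) = (fun s => 'D_(geod w (- p) s) (Fc j) (geod p w s)).
    by apply/funext => s; rewrite /h derive_coord //; exact: df.
  by case: hj.
rewrite /sff_diag Dgeod_f -/h derive_mx // mxE hi.
rewrite (@derive_val _ _ _ _ _ _ _ Di).
by rewrite (derive_dirN _ (smooth_diff _ (sFc i))).
Qed.

End G.

Section G2.
Context {R : realType} {N m : nat}.
Local Notation V := ('rV[R]_N.+1).
Variable f : V -> 'rV[R]_m.
Hypothesis sf : smooth f.
Hypothesis iso : forall p u v, on_sphere p -> tangent p u -> tangent p v ->
  dotv ('D_u f p) ('D_v f p) = dotv u v.

Lemma gauss_f (q u v : V) : on_sphere q -> dotv u u = 1 -> dotv v v = 1 ->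
  dotv q u = 0 -> dotv q v = 0 -> dotv u v = 0 ->
  1 <= dotv (sff_diag f q u) (sff_diag f q v).
Proof.
move=> qq uu vv qu qv uv.
have G := gauss (F := Fc f) (sFc sf) (isoF sf iso) qq uu vv qu qv uv.
have -> : dotv (sff_diag f q u) (sff_diag f q v) =
   \sum_(i < m) (- 'D_q (Fc f i) q + 'D_u ('D_u (Fc f i)) q) *
                (- 'D_q (Fc f i) q + 'D_v ('D_v (Fc f i)) q).
  rewrite /dotv; apply: eq_bigr => i _.
  exact: (congr2 (fun a b => a * b) (sff_coord sf q u i) (sff_coord sf q v i)).
rewrite G lerDl; apply: sumr_ge0 => i _; exact: sqr_ge0.
Qed.

Lemma umb_f (p : V) (e : nat -> V) : (2 <= N)%N -> on_sphere p ->
  tangent_on_family p e N ->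
  dotv (mean_curv f p e) (mean_curv f p e) <= 1 ->
  dotv (sff_diag f p (e 0%N)) (sff_diag f p (e 0%N)) <= 1.
Proof.
move=> N2 pp [t1 t2] hH.
have N0 : (0 < N)%N by apply: leq_trans N2.
pose x := fun a : 'I_N => sff_diag f p (e a).
have := @umbilic R m N x (Ordinal N0) N2.
apply.
  move=> a b ab; apply: gauss_f => //.
  - by rewrite t2 // eqxx.
  - by rewrite t2 // eqxx.
  - exact: t1.
  - exact: t1.
  - have ab' : (nat_of_ord a == nat_of_ord b) = false by apply/negbTE.
    by rewrite t2 // ab'.
by move: hH; rewrite /mean_curv big_mkord.
Qed.

End G2.

Definition Tn (k : nat) : nat := \sum_(i < k) (k - i.+1).

Lemma TnS k : Tn k.+1 = k + Tn k.
Proof.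
rewrite /Tn big_ord_recl /= subSS subn0; congr (_ + _).
Qed.

Lemma Tn2 x : (2 * Tn x + x = x * x)%N.
Proof.
elim: x => [|x IH].
  by rewrite /Tn big_ord0.
rewrite TnS; lia.
Qed.

Lemma cs_step (x A B C : nat) : (A * A <= B * C -> (x + A) * (x + A) <= (B + 1) * (x * x + C))%N.
Proof.
move=> H.
have H2 : (2 * x * A * B <= B * B * x * x + A * A)%N.
  have : (0 <= (B * x - A) * (B * x - A))%N by [].
  nia.
have H3 : (2 * x * A <= B * x * x + C)%N.
  case: (posnP B) => [B0|Bp].
    by move: H; rewrite B0 mul0n leqn0 muln_eq0 orbb => /eqP ->; rewrite !muln0.
  rewrite -(leq_pmul2l Bp); nia.
nia.
Qed.

Lemma cs_seq (s : seq nat) (r : nat) :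
  ((sumn s + r) * (sumn s + r) <= (size s + r) * (sumn (map (fun x => x * x) s) + r))%N.
Proof.
elim: s => [|x s IH] /=; first by rewrite !add0n.
have := @cs_step x _ _ _ IH.
move=> H.
have E1 : (x + sumn s + r = x + (sumn s + r))%N by rewrite addnA.
have E2 : ((size s).+1 + r = size s + r + 1)%N by rewrite addn1 addSn.
have E3 : (x * x + sumn [seq x0 * x0 | x0 <- s] + r = x * x + (sumn [seq x0 * x0 | x0 <- s] + r))%N by rewrite addnA.
by rewrite E1 E2 E3.
Qed.

Lemma Tsum2 (s : seq nat) : (2 * sumn (map Tn s) + sumn s = sumn (map (fun x => x * x) s))%N.
Proof. elim: s => //= x s IH; have := Tn2 x; nia. Qed.

Section F.
Context {R : realType} {N : nat}.
Local Notation V := ('rV[R]_N.+1).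

Lemma tau_seg1 (e : nat -> V) lo k : tau_seg (@K_RP1 R N) e lo (lo + k) = (Tn k)%:R.
Proof.
rewrite /tau_seg /K_RP1.
under eq_bigr do rewrite sumr_const_nat.
rewrite -{1}(add0n lo) big_addn addKn big_mkord /Tn natr_sum.
by apply: eq_bigr => i _; rewrite -addSn [(lo + k)%N]addnC subnDr.
Qed.

Lemma tau_blocks1 (E : nat -> V) lo s :
  tau_blocks (@K_RP1 R N) E lo s = (sumn (map Tn s))%:R.
Proof.
elim: s lo => [|x s IH] lo /=; first by [].
by rewrite tau_seg1 IH natrD.
Qed.

End F.

Section F2.
Context {R : realType}.

Lemma ratio_le1 (n : nat) (s : seq nat) : (2 <= n)%N -> S_adm n s ->
  ((Tn n)%:R - (sumn (map Tn s))%:R) / c_const R n s <= 1.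
Proof.
move=> n2 /and3P [k0 allx Sle].
set k := size s; set S := sumn s; set Q := sumn (map (fun x => x * x) s).
set Ts := sumn (map Tn s); set r := (n - S)%N.
have nSr : (S + r = n)%N by rewrite /r subnKC.
have cs := cs_seq s r; rewrite -/S -/k -/Q nSr in cs.
have t2 := Tn2 n; have ts := Tsum2 s; rewrite -/S -/Q -/Ts in ts.
have hn : 2 * (Tn n)%:R + n%:R = n%:R * n%:R :> R.
  by have := congr1 (fun x : nat => x%:R : R) t2; rewrite /= natrD !natrM.
have hs : 2 * Ts%:R + S%:R = Q%:R :> R.
  by have := congr1 (fun x : nat => x%:R : R) ts; rewrite /= natrD !natrM.
have hcs : n%:R * n%:R <= (k%:R + r%:R) * (Q%:R + r%:R) :> R.
  by rewrite -!natrD -!natrM ler_nat.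
have hnr : n%:R = S%:R + r%:R :> R by rewrite -natrD nSr.
have hM : (n + k)%:R - S%:R = k%:R + r%:R :> R by rewrite natrD hnr; ring.
have n2R : 2 <= n%:R :> R by rewrite ler_nat.
have r0 : 0 <= r%:R :> R by [].
rewrite /c_const -/k -/S hM.
have [kr1|kr1] := eqVneq (k + r)%N 1%N.
  have -> : (n + k)%:R - 1 - S%:R = 0 :> R.
    by rewrite -addrA [- 1 + _]addrC addrA hM -natrD kr1 subrr.
  by rewrite mulr0 mul0r invr0 mulr0.
have kr2 : (2 <= k + r)%N by move: k0 kr1; rewrite -/k; lia.
have M2 : 2 <= k%:R + r%:R :> R by rewrite -natrD ler_nat.
have -> : (n + k)%:R - 1 - S%:R = k%:R + r%:R - 1 :> R.
  by rewrite -hM; ring.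
have cpos : 0 < n%:R ^+ 2 * (k%:R + r%:R - 1) / (2 * (k%:R + r%:R)) :> R.
  apply: divr_gt0; last by nra.
  apply: mulr_gt0; last by lra.
  by rewrite exprn_gt0 //; lra.
rewrite ler_pdivrMr // mul1r ler_pdivlMr; last by nra.
have -> : ((Tn n)%:R - Ts%:R) * (2 * (k%:R + r%:R)) =
   (n%:R * n%:R - r%:R - Q%:R) * (k%:R + r%:R) :> R.
  have e1 : 2 * (Tn n)%:R = n%:R * n%:R - n%:R :> R by lra.
  have e2 : 2 * Ts%:R = Q%:R - S%:R :> R by lra.
  have -> : ((Tn n)%:R - Ts%:R) * (2 * (k%:R + r%:R)) =
     (2 * (Tn n)%:R - 2 * Ts%:R) * (k%:R + r%:R) :> R by ring.
  rewrite e1 e2 hnr; ring.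
rewrite expr2; nra.
Qed.

Lemma Delta_le1 {N : nat} (p : 'rV[R]_N.+1) (e : nat -> 'rV[R]_N.+1) :
  (2 <= N)%N -> tangent_on_family p e N -> DeltaHat0 (@K_RP1 R N) p e <= 1.
Proof.
move=> N2 [tf1 tf2].
rewrite /DeltaHat0.
set A := [set t | exists s, S_adm N s /\ t = delta_inv (@K_RP1 R N) p e s / c_const R N s].
have [ne|emp] := pselect (A !=set0).
  apply: ge_sup => // t [s [adm ->]].
  have Sle : (sumn s <= N)%N by case/and3P: adm.
  have H : [set t | exists E, tangent_on_family p E (sumn s) /\ t = tau_blocks (@K_RP1 R N) E 0 s]
         = [set (sumn (map Tn s))%:R].
    apply/seteqP; split => x /=.
      by move=> [E [_ ->]]; rewrite tau_blocks1.
    move=> ->; exists e; split; last by rewrite tau_blocks1.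
    split.
      by move=> a ha; apply: tf1; apply: leq_trans ha Sle.
    by move=> a b ha hb; apply: tf2; apply: leq_trans Sle.
  have T : tau_seg (@K_RP1 R N) e 0 N = (Tn N)%:R by exact: (tau_seg1 e 0 N).
  rewrite /delta_inv H inf1 T.
  exact: ratio_le1.
have -> : A = set0.
  by apply/seteqP; split => x // hx; apply: emp; exists x.
by rewrite sup0 ler01.
Qed.

End F2.

Section H.
Context {R : realType}.

Lemma mono_le (h dh : R -> R) (a b : R) : (forall t : R, is_derive t 1 h (dh t)) -> a <= b ->
  (forall c, a <= c -> c <= b -> 0 <= dh c) -> h a <= h b.
Proof.
move=> Hd ab Hpos.
have cont : {within `[a, b], continuous h}.
  apply: continuous_subspaceT => t.
  have [dr _] := Hd t.
  by move/derivable1_diffP: dr => /differentiable_continuous.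
have [c /andP[]] := MVT_segment ab (fun x _ => Hd x) cont.
rewrite !bnd_simp => ac cb E.
rewrite -subr_ge0 E; apply: mulr_ge0; first exact: Hpos.
by rewrite subr_ge0.
Qed.

Lemma is_derive_idf (t : R) : is_derive t 1 (fun s : R => s) 1.
Proof. exact: is_derive_id. Qed.

Lemma is_derive_cstf (t c : R) : is_derive t 1 (fun s : R => c) 0.
Proof. exact: is_derive_cst. Qed.

Lemma is_derive_sq (t : R) : is_derive t 1 (fun s : R => s * s) (t + t).
Proof.
apply: is_derive_eq (is_deriveMf (is_derive_idf t) (is_derive_idf t)) _.
by rewrite mulr1.
Qed.

Lemma is_derive_scalf (f : R -> R) (c t df : R) : is_derive t 1 f df ->
  is_derive t 1 (fun s => c * f s) (c * df).
Proof.
move=> h; apply: is_derive_eq (is_deriveMf (is_derive_cstf t c) h) _.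
by rewrite mulr0 addr0.
Qed.

Lemma curve_contra (g g' g'' : R -> R) :
  (forall t : R, is_derive t 1 g (g' t)) -> (forall t : R, is_derive t 1 g' (g'' t)) ->
  (forall t, -1 <= g'' t) -> (forall t, g'' t <= 1) ->
  g' 0 = 1 -> g (pi / 2) = g (- (pi / 2)) -> False.
Proof.
move=> dg dg' lo hi g1 gpi.
have p0 : 0 < pi / 2 :> R by rewrite divr_gt0 // pi_gt0.
have p2 := @pihalf_lt2 R.
have A : forall t, 0 <= t -> 1 - t <= g' t.
  move=> t t0.
  have : g' 0 + 0 <= g' t + t.
    apply: (@mono_le (fun s => g' s + s) (fun s => g'' s + 1) 0 t) => //.
    by move=> c _ _; have := lo c; lra.
  rewrite g1; lra.
have B : forall t, t <= 0 -> 1 + t <= g' t.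
  move=> t t0.
  have : - g' t + t <= - g' 0 + 0.
    apply: (@mono_le (fun s => - g' s + s) (fun s => - g'' s + 1) t 0) => //.
    by move=> c _ _; have := hi c; lra.
  rewrite g1; lra.
have C1 : 2 * g 0 - 2 * 0 + 0 * 0 <= 2 * g (pi / 2) - 2 * (pi / 2) + (pi / 2) * (pi / 2).
  apply: (@mono_le (fun s => 2 * g s - 2 * s + s * s) (fun s => 2 * g' s - 2 * 1 + (s + s)) 0 (pi / 2)).
  - move=> s /=.
    exact: (is_deriveDf (is_deriveDf (is_derive_scalf 2 (dg s)) (is_deriveNf (is_derive_scalf 2 (is_derive_idf s)))) (is_derive_sq s)).
  - exact: ltW.
  - by move=> c c0 _; have := A c c0; lra.
have C2 : 2 * g (- (pi / 2)) - 2 * (- (pi / 2)) - (- (pi / 2)) * (- (pi / 2)) <= 2 * g 0 - 2 * 0 - 0 * 0.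
  apply: (@mono_le (fun s => 2 * g s - 2 * s - s * s) (fun s => 2 * g' s - 2 * 1 - (s + s)) (- (pi / 2)) 0).
  - move=> s /=.
    exact: (is_deriveDf (is_deriveDf (is_derive_scalf 2 (dg s)) (is_deriveNf (is_derive_scalf 2 (is_derive_idf s)))) (is_deriveNf (is_derive_sq s))).
  - by rewrite oppr_le0; exact: ltW.
  - by move=> c _ c0; have := B c c0; lra.
rewrite gpi in C1.
move: C1 C2 p0 p2; set x := pi / 2 => C1 C2 p0 p2.
have : 0 < x * (2 - x) by apply: mulr_gt0; lra.
nra.
Qed.

End H.

Section Fin.
Context {R : realType}.

Lemma dotv_delta {k : nat} (i j : 'I_k) :
  dotv (delta_mx 0 i : 'rV[R]_k) (delta_mx 0 j) = (i == j)%:R.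
Proof.
rewrite /dotv (bigD1 i) //= big1 ?addr0; last first.
  by move=> l li; rewrite !mxE /= (negbTE li) mul0r.
rewrite !mxE /= eqxx /= mul1r.
by case: (i == j).
Qed.

Lemma inord_eq {n : nat} (a b : nat) : (a <= n)%N -> (b <= n)%N ->
  ((inord a : 'I_n.+1) == inord b) = (a == b).
Proof.
move=> an bn; apply/eqP/eqP => [h|->] //.
by have := congr1 val h; rewrite /= !inordK.
Qed.

Lemma abs_dot_le1 {k : nat} (u x : 'rV[R]_k) : dotv u u = 1 -> dotv x x <= 1 ->
  -1 <= dotv u x /\ dotv u x <= 1.
Proof.
move=> uu xx.
have h1 := dotv_ge0 (u + x); have h2 := dotv_ge0 (u - x).
rewrite !dotvDl !dotvDr (dotvC x u) uu in h1.
rewrite !dotvDl !dotvDr !dotvNl !dotvNr opprK (dotvC x u) uu in h2.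
split; lra.
Qed.

End Fin.

Unset Implicit Arguments.

Theorem mainTheorem3 (R : realType) (n m : nat) :
  (2 <= n)%N ->
  ~ exists f : 'rV[R]_n.+1 -> 'rV[R]_m,
      isometric_immersion_RP f /\ ideal_RP f.
Proof.
move=> n2 [f [[sf [anti iso]] ideal]].
pose E0 : 'rV[R]_n.+1 := delta_mx 0 (inord 0).
pose E1 : 'rV[R]_n.+1 := delta_mx 0 (inord 1).
pose Eb (a : nat) : 'rV[R]_n.+1 := delta_mx 0 (inord a.+1).
have n1 : (1 <= n)%N by apply: leq_trans n2.
have d00 : dotv E0 E0 = 1 by rewrite /E0 dotv_delta eqxx.
have d11 : dotv E1 E1 = 1 by rewrite /E1 dotv_delta eqxx.
have d01 : dotv E0 E1 = 0 by rewrite /E0 /E1 dotv_delta inord_eq.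
have d0b : forall a, (a < n)%N -> dotv E0 (Eb a) = 0.
  by move=> a an; rewrite /E0 /Eb dotv_delta inord_eq.
have d1b : forall a, (a < n)%N -> a != 0%N -> dotv E1 (Eb a) = 0.
  move=> a an a0; rewrite /E1 /Eb dotv_delta inord_eq //.
  by move: a0; case: a an => [|a] //.
have dbb : forall a b, (a < n)%N -> (b < n)%N -> dotv (Eb a) (Eb b) = (a == b)%:R.
  by move=> a b an bn; rewrite /Eb dotv_delta inord_eq.
pose fr (t : R) (a : nat) := if a == 0%N then geod E1 (- E0) t else Eb a.
have sph : forall t, on_sphere (geod E0 E1 t) by move=> t; apply: geod_sphere.
have frame : forall t, tangent_on_family (geod E0 E1 t) (fr t) n.
  move=> t; split.
    move=> a an; rewrite /fr; case: eqP => [_|/eqP a0].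
      exact: geod_tan.
    by apply: geod_tanw; [exact: (d0b _ an)|exact: (d1b _ an a0)].
  move=> a b an bn; rewrite /fr.
  case: eqP => [->|/eqP a0]; case: eqP => [->|/eqP b0] //=.
  - exact: geod'_unit.
  - by rewrite (geod'_w t (d0b _ bn) (d1b _ bn b0)) eq_sym (negbTE b0).
  - by rewrite dotvC (geod'_w t (d0b _ an) (d1b _ an a0)) (negbTE a0).
  - by rewrite dbb.
have bound : forall t, dotv (sff_diag f (geod E0 E1 t) (geod E1 (- E0) t))
                            (sff_diag f (geod E0 E1 t) (geod E1 (- E0) t)) <= 1.
  move=> t.
  have := umb_f sf iso n2 (sph t) (frame t).
  apply; rewrite ideal //.
  exact: Delta_le1.
pose u := 'D_E1 f E0.
have sph0 : on_sphere E0 by [].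
have uu : dotv u u = 1 by rewrite /u iso.
pose g := fun t => \sum_(i < m) u 0 i * Fc f i (geod E0 E1 t).
pose g1 := fun t => \sum_(i < m) u 0 i * 'D_(geod E1 (- E0) t) (Fc f i) (geod E0 E1 t).
pose g2 := fun t => dotv u (sff_diag f (geod E0 E1 t) (geod E1 (- E0) t)).
have dg : forall t : R, is_derive t 1 g (g1 t).
  move=> t; apply: is_derive_sumf => i.
  exact: (is_derive_scalf (u 0 i) (is_derive_comp_geod (P:=E0) (Q:=E1) (t:=t) (smooth_diff _ (sFc sf i)))).
have dg1 : forall t : R, is_derive t 1 g1 (g2 t).
  move=> t; apply: is_derive_eq.
    apply: is_derive_sumf => i.
    exact: (is_derive_scalf (u 0 i) (is_derive_var E0 E1 E1 (- E0) t (sFc sf i))).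
  rewrite /g2 /dotv; apply: eq_bigr => i _.
  apply: congr1.
  apply: (etrans _ (esym (sff_coord sf _ _ i))).
  congr (_ + _).
  have gN : geod (- E0) (- E1) t = - geod E0 E1 t by rewrite /geod !scalerN opprD.
  have := derive_dirN (geod E0 E1 t) (smooth_diff (geod E0 E1 t) (sFc sf i)).
  by rewrite -gN.
have lo : forall t, -1 <= g2 t by move=> t; case: (abs_dot_le1 uu (bound t)).
have hi : forall t, g2 t <= 1 by move=> t; case: (abs_dot_le1 uu (bound t)).
have g10 : g1 0 = 1.
  rewrite /g1 -uu /dotv; apply: eq_bigr => i _.
  apply: congr1.
  rewrite !geod0 /u derive_coord //.
  exact: smooth_diff.
have gpi : g (pi / 2) = g (- (pi / 2)).
  have e1 : geod E0 E1 (pi / 2) = E1 by rewrite /geod cos_pihalf sin_pihalf scale0r add0r scale1r.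
  have e2 : geod E0 E1 (- (pi / 2)) = - E1.
    by rewrite /geod cosN sinN cos_pihalf sin_pihalf scale0r add0r scaleN1r.
  rewrite /g e1 e2; apply: eq_bigr => i _; rewrite /Fc anti //.
exact: (curve_contra dg dg1 lo hi g10 gpi).
Qed.
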